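(* Let $N\ge1$, $r_1,\dots,r_N$ real, $(\mu_{ij})$ an $N\times N$ real matrix and $\Psi_1,\dots,\Psi_N:\mathbb{R}^N\to\mathbb{R}$ such that: $r_i>0$; $(\mu_{ij})$ is nonnegative, symmetric and irreducible; each $\Psi_i$ is locally Lipschitz, $\Psi_i(0)=0$, monotone increasing for the componentwise order; for each $i$ there exist positive $R_i,k_i,c_i$ with $c_i(\sum_jv_j)^{k_i}\le\Psi_i(v)$ for all $v\in[0,\infty)^N$ with $\sum_j|v_j|\ge R_i$; and $\sum_{j=1}^N\mu_{ij}\le r_i/2$ for all $i$. Let $R=\mathrm{diag}(r_1,\dots,r_N)$ and let $M$ be the matrix with $M_{ij}=\mu_{ij}$ for $i\ne j$ and $M_{ii}=\mu_{ii}-\sum_{j=1}^N\mu_{ij}$. For $s\in[0,1]$ let $\Psi_i^s=s\Psi_i+(1-s)\Psi_1$ and $\Xi^s(V)=\mathrm{diag}(\Psi^s_1(V),\dots,\Psi^s_N(V))$. Let $V\in[0,\infty)^N$ be a nonnegative solution of $$(R+M)V=\Xi^s(V)V.$$ Then either $V\equiv0$ or $V_i>0$ for all $i$; and there exist constants $\bar c_1,\bar C_1>0$ independent of $s$ (and of $V$) such that, in the latter case, $\bar c_1\le\sum_iV_i\le\bar C_1$. *)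

(* Defs.v *)
From HB Require Import structures.
From mathcomp Require Import all_boot all_order all_algebra.
From mathcomp Require Import all_classical all_reals all_analysis.
Set Implicit Arguments. Unset Strict Implicit. Unset Printing Implicit Defensive.
Import Order.TTheory GRing.Theory Num.Theory.
Local Open Scope ring_scope.

(* local Lipschitz continuity of f : R^N -> R (w.r.t. the l^1 norm;
   all norms on R^N are equivalent) *)
Definition locally_lipschitz {R : realType} {N : nat} (f : ('I_N -> R) -> R) :=
  forall x : 'I_N -> R, exists delta : R, 0 < delta /\ exists L : R,
    forall u v : 'I_N -> R,
      (forall j, `|u j - x j| < delta) -> (forall j, `|v j - x j| < delta) ->
      `|f u - f v| <= L * \sum_j `|u j - v j|.

Definition componentwise_increasing {R : realType} {N : nat}
  (f : ('I_N -> R) -> R) :=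
  forall u v : 'I_N -> R, (forall j, u j <= v j) -> f u <= f v.

Definition irreducible_mx {R : realType} {N : nat} (mu : 'M[R]_N) :=
  forall S : {set 'I_N}, (0 < #|S|)%N -> (#|S| < N)%N ->
    exists i, exists j, [/\ i \in S, j \notin S & mu i j != 0].

Definition Mmat {R : realType} {N : nat} (mu : 'M[R]_N) : 'M[R]_N :=
  \matrix_(i, j) (if i == j then mu i i - \sum_k mu i k else mu i j).

(* Psi^s_i = s Psi_i + (1-s) Psi_1  (Psi_1 is index 0) *)
Definition Psis {R : realType} {N : nat} (Psi : 'I_N.+1 -> ('I_N.+1 -> R) -> R)
  (s : R) (i : 'I_N.+1) (v : 'I_N.+1 -> R) : R :=
  s * Psi i v + (1 - s) * Psi ord0 v.

Definition is_solution {R : realType} {N : nat} (r : 'I_N.+1 -> R)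
  (mu : 'M[R]_N.+1) (Psi : 'I_N.+1 -> ('I_N.+1 -> R) -> R) (s : R)
  (V : 'I_N.+1 -> R) :=
  forall i, r i * V i + \sum_j Mmat mu i j * V j = Psis Psi s i V * V i.

(* Main.v *)
Require Import Defs.
From HB Require Import structures.
From mathcomp Require Import all_boot all_order all_algebra.
From mathcomp Require Import all_classical all_reals all_analysis.
From mathcomp Require Import ring lra.
Import Order.TTheory GRing.Theory Num.Theory.
Local Open Scope ring_scope.

Lemma Msum (R : realType) (N : nat) (mu : 'M[R]_N.+1) (V : 'I_N.+1 -> R) i :
  \sum_j Mmat mu i j * V j = \sum_j mu i j * V j - (\sum_k mu i k) * V i.
Proof.
rewrite (bigD1 i) //= [X in _ = X - _](bigD1 i) //=.
rewrite (eq_bigr (fun j => mu i j * V j)); last first.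
  by move=> j nj; rewrite /Mmat mxE eq_sym (negbTE nj).
rewrite /Mmat mxE eqxx.
ring.
Qed.

Lemma term_le_sum (R : realType) (N : nat) (V : 'I_N.+1 -> R) j :
  (forall i, 0 <= V i) -> V j <= \sum_i V i.
Proof.
move=> hV; rewrite (bigD1 j) //= lerDl; apply: sumr_ge0 => i _; exact: hV.
Qed.

Lemma Msum_total (R : realType) (N : nat) (mu : 'M[R]_N.+1) (V : 'I_N.+1 -> R) :
  mu^T = mu -> \sum_i \sum_j Mmat mu i j * V j = 0.
Proof.
move=> hs.
under eq_bigr do rewrite Msum.
rewrite sumrB exchange_big /=.
apply/eqP; rewrite subr_eq0; apply/eqP.
apply: eq_bigr => j _; rewrite -mulr_suml; congr (_ * _).
apply: eq_bigr => i _.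
by have := congr1 (fun A : 'M[R]_N.+1 => A j i) hs; rewrite mxE => ->.
Qed.

Theorem lemma6p1 (R : realType) (N : nat) (r : 'I_N.+1 -> R)
  (mu : 'M[R]_N.+1) (Psi : 'I_N.+1 -> ('I_N.+1 -> R) -> R)
  (hr : forall i, 0 < r i)
  (hmu_nneg : forall i j, 0 <= mu i j)
  (hmu_sym : mu^T = mu)
  (hmu_irr : irreducible_mx mu)
  (hPsi_lip : forall i, locally_lipschitz (Psi i))
  (hPsi0 : forall i, Psi i (fun _ => 0) = 0)
  (hPsi_mono : forall i, componentwise_increasing (Psi i))
  (hPsi_growth : forall i, exists Ri ki ci : R, [/\ 0 < Ri, 0 < ki, 0 < ci &
      forall v : 'I_N.+1 -> R, (forall j, 0 <= v j) ->
        Ri <= \sum_j `|v j| -> ci * (\sum_j v j) `^ ki <= Psi i v])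
  (hmu_sum : forall i, \sum_j mu i j <= r i / 2) :
  (forall (s : R) (V : 'I_N.+1 -> R), 0 <= s <= 1 ->
     (forall i, 0 <= V i) -> is_solution r mu Psi s V ->
     V = (fun _ => 0) \/ (forall i, 0 < V i))
  /\
  (exists c1 C1 : R, [/\ 0 < c1, 0 < C1 &
     forall (s : R) (V : 'I_N.+1 -> R), 0 <= s <= 1 ->
       (forall i, 0 <= V i) -> is_solution r mu Psi s V ->
       (forall i, 0 < V i) ->
       c1 <= \sum_i V i <= C1]).
Proof.
split.
  move=> s V hs hV hsol.
  have [hpos|] := pselect (forall i, 0 < V i); first by right.
  move=> /existsNP [i0 hi0]; left.
  have Vi0 : V i0 = 0.
    by move: (hV i0); rewrite le_eqVlt => /orP [/eqP <-|] //.
  apply/funext => j; apply/eqP; apply/negPn/negP => Vj.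
  pose S := [set i | V i == 0].
  have hS1 : (0 < #|S|)%N by apply/card_gt0P; exists i0; rewrite inE Vi0.
  have hS2 : (#|S| < N.+1)%N.
    have : (0 < #|~: S|)%N by apply/card_gt0P; exists j; rewrite !inE.
    move=> h; have hc := cardsC S; rewrite [in RHS]card_ord in hc.
    apply: (@leq_trans (#|S| + #|~: S|)); last by rewrite hc.
    by rewrite -[X in (X < _)%N]addn0 ltn_add2l.
  have [i [k [iS kS muik]]] := hmu_irr S hS1 hS2.
  move: iS kS; rewrite !inE => /eqP Vi /negP Vk; apply: Vk.
  have := hsol i; rewrite Msum Vi !mulr0 add0r subr0 => h0.
  have := h0; move/eqP; rewrite psumr_eq0; last first.
    by move=> l _; apply: mulr_ge0.
  move/allP => /(_ k (mem_index_enum _)) /implyP /(_ isT).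
  by rewrite mulf_eq0 (negbTE muik).
have Psi_ge0 : forall i V, (forall j, 0 <= V j) -> 0 <= Psi i V.
  by move=> i V hV; rewrite -(hPsi0 i); apply: hPsi_mono.
have [delta [hdelta [L hL]]] := hPsi_lip ord0 (fun _ => 0).
have : forall i, exists t : R * R * R, [/\ 0 < t.1.1, 0 < t.1.2, 0 < t.2 &
      forall v : 'I_N.+1 -> R, (forall j, 0 <= v j) ->
        t.1.1 <= \sum_j `|v j| -> t.2 * (\sum_j v j) `^ t.1.2 <= Psi i v].
  by move=> i; have [Ri [ki [ci H]]] := hPsi_growth i; exists (Ri, ki, ci).
case/choice => t ht.
pose rsum := \sum_i r i.
have rsum_gt0 : 0 < rsum.
  apply: (lt_le_trans (hr ord0)); apply: term_le_sum => i; exact: ltW.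
pose T i := (rsum / (t i).2) `^ ((t i).1.2)^-1.
pose C1 := \sum_i (t i).1.1 + \sum_i T i.
have T_ge0 : forall i, 0 <= T i by move=> i; exact: powR_ge0.
have Rt_le : forall i, (t i).1.1 <= C1.
  move=> i; apply: (le_trans (y := \sum_i (t i).1.1)); last first.
    by rewrite /C1 lerDl; apply: sumr_ge0.
  by apply: term_le_sum => j; have [] := ht j => /ltW.
have T_le : forall i, T i <= C1.
  move=> i; apply: (le_trans (y := \sum_i T i)); last first.
    by rewrite /C1 lerDr; apply: sumr_ge0 => j _; have [] := ht j => /ltW.
  exact: term_le_sum.
exists (Num.min delta (r ord0 / (2 * (`|L| + 1)))), C1; split.
- rewrite lt_min hdelta /=; apply: divr_gt0 => //.
- by apply: (lt_le_trans _ (Rt_le ord0)); have [] := ht ord0.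
move=> s V hs hV hsol hpos.
have hsum : \sum_i r i * V i = \sum_i Psis Psi s i V * V i.
  have := @Msum_total _ _ mu V hmu_sym.
  rewrite (eq_bigr (fun i => Psis Psi s i V * V i - r i * V i)); last first.
    by move=> i _; rewrite -(hsol i) addrC addKr.
  by rewrite sumrB => /eqP; rewrite subr_eq0 => /eqP ->.
have hSV : \sum_j `|V j| = \sum_j V j.
  by apply: eq_bigr => j _; rewrite ger0_norm.
apply/andP; split.
  have e0 := hsol ord0; rewrite Msum in e0.
  have eP : Psis Psi s ord0 V = Psi ord0 V by rewrite /Psis; ring.
  rewrite eP in e0.
  have hA : 0 <= \sum_j mu ord0 j * V j.
    by apply: sumr_ge0 => j _; apply: mulr_ge0.
  have hm := hmu_sum ord0.
  have hP : r ord0 / 2 <= Psi ord0 V.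
    rewrite -subr_ge0 -(pmulr_lge0 _ (hpos ord0)).
    have -> : (Psi ord0 V - r ord0 / 2) * V ord0 =
      \sum_j mu ord0 j * V j + (r ord0 / 2 - \sum_j mu ord0 j) * V ord0.
      rewrite mulrBl -e0; field.
    1: by [].
    apply: addr_ge0 => //; apply: mulr_ge0; [by rewrite subr_ge0 | exact: hV].
  have [hsm|] := pselect (forall j, `|V j - 0| < delta).
    have h00 : forall j, `|(fun _ : 'I_N.+1 => 0 : R) j - 0| < delta.
      by move=> j; rewrite subrr normr0.
    have := hL V (fun _ => 0) hsm h00.
    rewrite hPsi0 subr0.
    rewrite (eq_bigr (fun j => V j)); last by move=> j _; rewrite subr0 ger0_norm.
    move=> hle.
    have hS0 : 0 <= \sum_j V j by apply: sumr_ge0.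
    have hn := ler_norm (Psi ord0 V).
    have hLn := ler_norm L.
    rewrite ge_min; apply/orP; right.
    have h1 : r ord0 / 2 <= `|L| * \sum_j V j.
      exact: le_trans hP (le_trans hn (le_trans hle (ler_wpM2r hS0 hLn))).
    rewrite ler_pdivrMr; last by [].
    move: h1 hS0 (normr_ge0 L).
    generalize (\sum_j V j) (`|L|) (r ord0) => x a b h1 h2 h3.
    clear -h1 h2 h3.
    nra.
  move=> /existsNP [j /negP]; rewrite -leNgt subr0 ger0_norm // => hj.
  rewrite ge_min; apply/orP; left.
  exact: (le_trans hj (@term_le_sum _ _ V j hV)).
rewrite leNgt; apply/negP => hC.
have hPsi : forall i, rsum < Psi i V.
  move=> i; have [h1 h2 h3 h4] := ht i.
  apply: (lt_le_trans _ (h4 V hV _)); last first.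
    by rewrite hSV; apply: (le_trans (Rt_le i)); apply: ltW.
  have -> : rsum = (t i).2 * T i `^ (t i).1.2.
    rewrite /T -powRrM mulVf ?gt_eqF // powRr1; last first.
      by apply: divr_ge0; apply: ltW.
    by rewrite mulrC divfK ?gt_eqF.
  rewrite ltr_pM2l //; apply: gt0_ltr_powR => //.
  - by rewrite nnegrE; apply: T_ge0.
  - by rewrite nnegrE; apply: sumr_ge0.
  exact: (le_lt_trans (T_le i)).
have hPs : forall i, rsum < Psis Psi s i V.
  move=> i; have := hPsi i; have := hPsi ord0; rewrite /Psis.
  move: hs => /andP [hs0 hs1].
  generalize (Psi i V) (Psi ord0 V) rsum s hs0 hs1 => a b c x h0 h1 hb ha.
  clear -h0 h1 hb ha.
  have [hab|hab] := leP a b.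
    have : 0 <= (1 - x) * (b - a) by apply: mulr_ge0; lra.
    lra.
  have : 0 <= x * (a - b) by apply: mulr_ge0; lra.
  lra.
have : \sum_i r i * V i < \sum_i Psis Psi s i V * V i.
  apply: (le_lt_trans (y := \sum_i rsum * V i)).
    apply: ler_sum => i _; apply: ler_wpM2r => //.
    apply: term_le_sum => j; exact: ltW.
  apply: ltr_sum.
    by apply/hasP; exists ord0; first exact: mem_index_enum.
  by move=> i _; rewrite ltr_pM2r.
by rewrite hsum ltxx.
Qed.
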